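(* Let $K$ be a number field and let $\mathcal{R}_K$ be a system of representatives of the ideal class group of $K$ such that each $\mathfrak{g}\in\mathcal{R}_K$ is an integral ideal of $\mathcal{O}_K$ whose absolute norm is minimal among the integral ideals in its ideal class. Then every element of $\mathcal{R}_K$ is inseverable.
   Context: A nonzero ideal $\mathfrak{a}\subseteq\mathcal{O}_K$ is inseverable if the only principal ideal dividing (containing) $\mathfrak{a}$ is $\mathcal{O}_K$. *)

(* Defs.v *)
From HB Require Import structures.
From mathcomp Require Import all_boot all_order all_algebra all_field.
From mathcomp Require Import boolp classical_sets.
Set Implicit Arguments. Unset Strict Implicit. Unset Printing Implicit Defensive.
Import Order.TTheory GRing.Theory Num.Theory.
Local Open Scope ring_scope.
Local Open Scope classical_set_scope.

Section NF.
Variable K : fieldExtType rat.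

Definition ringOfIntegers : set K :=
  [set x | exists p : {poly int}, p \is monic /\ root (map_poly intr p) x].

Definition is_ideal (a : set K) : Prop :=
  a `<=` ringOfIntegers /\ a 0 /\
  (forall x y, a x -> a y -> a (x + y)) /\
  (forall r x, ringOfIntegers r -> a x -> a (r * x)).

Definition nonzero_ideal (a : set K) : Prop :=
  is_ideal a /\ exists x, a x /\ x != 0.

Definition principal_ideal_of (x : K) : set K :=
  [set y | exists r, ringOfIntegers r /\ y = r * x].

Definition is_principal (b : set K) : Prop :=
  exists x, ringOfIntegers x /\ b = principal_ideal_of x.

Definition scale_set (c : K) (a : set K) : set K :=
  [set y | exists z, a z /\ y = c * z].

Definition same_class (a b : set K) : Prop :=
  exists c : K, c != 0 /\ a = scale_set c b.

(* ideal_norm a n : the absolute norm #(O_K / a) equals n, i.e. there are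
   exactly n residue classes of O_K modulo a. *)
Definition ideal_norm (a : set K) (n : nat) : Prop :=
  exists f : 'I_n -> K,
    (forall i, ringOfIntegers (f i)) /\
    (forall i j, a (f i - f j) -> i = j) /\
    (forall x, ringOfIntegers x -> exists i, a (x - f i)).

(* Inseverable: a nonzero ideal whose only principal divisor (superset) is O_K. *)
Definition inseverable (a : set K) : Prop :=
  nonzero_ideal a /\
  forall b, is_ideal b -> is_principal b -> a `<=` b -> b = ringOfIntegers.

Definition minimal_norm_class_reps (R : set (set K)) : Prop :=
  (forall g, R g -> nonzero_ideal g) /\
  (forall a, nonzero_ideal a -> exists g, R g /\ same_class a g) /\
  (forall g h, R g -> R h -> same_class g h -> g = h) /\
  (forall g, R g -> forall b, nonzero_ideal b -> same_class b g ->
     forall n m, ideal_norm g n -> ideal_norm b m -> (n <= m)%N).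

End NF.

(* Main.v *)
Require Import Defs.
From mathcomp Require Import all_boot all_order all_algebra all_field.
From mathcomp Require Import boolp classical_sets.
From mathcomp Require Import zify ring.
Set Implicit Arguments. Unset Strict Implicit. Unset Printing Implicit Defensive.
Import Order.TTheory GRing.Theory Num.Theory.
Local Open Scope ring_scope.
Section S.
Variable K : fieldExtType rat.
Local Notation O := (@ringOfIntegers K).
Lemma OE x : O x <-> integralOver (intr : int -> K) x.
Proof. split; [by case=> p [? ?]; exists p | by case=> p ? ?; exists p]. Qed.
Lemma O_add x y : O x -> O y -> O (x + y).
Proof. by move=> /OE hx /OE hy; apply/OE; apply: integral_add. Qed.
Lemma O_mul x y : O x -> O y -> O (x * y).
Proof. by move=> /OE hx /OE hy; apply/OE; apply: integral_mul. Qed.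
Lemma O_opp x : O x -> O (- x).
Proof. by move=> /OE hx; apply/OE; apply: integral_opp. Qed.
Lemma O_int (z : int) : O (z%:~R).
Proof. apply/OE. have := integral_id (intr : {rmorphism int -> K}) z. by []. Qed.

Section Ideal.
Variable a : set K.
Hypothesis ha : is_ideal a.
Lemma id_sub x : a x -> O x. Proof. by case: ha => h _; apply: h. Qed.
Lemma id0 : a 0. Proof. by case: ha => _ []. Qed.
Lemma idD x y : a x -> a y -> a (x + y). Proof. by case: ha => _ [_ []] h _; apply: h. Qed.
Lemma idM r x : O r -> a x -> a (r * x). Proof. by case: ha => _ [_ []] _ h; apply: h. Qed.
Lemma idN x : a x -> a (- x).
Proof. by move=> hx; rewrite -mulN1r; apply: idM => //; have := O_int (-1); rewrite mulrNz. Qed.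
Lemma id_sym x y : a (x - y) -> a (y - x).
Proof. by move=> /idN; rewrite opprB. Qed.
Lemma id_trans x y z : a (x - y) -> a (y - z) -> a (x - z).
Proof. by move=> h1 h2; have := idD h1 h2; rewrite addrA subrK. Qed.

Lemma finite_index (F : finType) (h : K -> F) :
  (forall x y, O x -> O y -> h x = h y -> a (x - y)) -> exists n, ideal_norm a n.
Proof.
move=> hh.
pose reach s := exists x, O x /\ h x = s.
pose rep s := match pselect (reach s) with left H => projT1 (cid H) | right _ => 0 end.
have rep_spec s : reach s -> O (rep s) /\ h (rep s) = s.
  rewrite /rep => H; case: pselect => // H'; exact: (projT2 (cid H')).
pose good s := `[< reach s /\ forall s', (enum_rank s' < enum_rank s)%N -> reach s' -> ~ a (rep s' - rep s) >].
pose P := [set s | good s].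
exists #|P|.
exists (fun i => rep (enum_val i)); split; [|split].
- move=> i; have := enum_valP i; rewrite inE => /asboolP [r _]; exact: (rep_spec _ r).1.
- move=> i j hij.
  have := enum_valP i; rewrite inE => /asboolP [ri gi].
  have := enum_valP j; rewrite inE => /asboolP [rj gj].
  have [eij|nij] := eqVneq (enum_val i) (enum_val j); first exact: enum_val_inj.
  have nr : enum_rank (enum_val i) != enum_rank (enum_val j).
    by apply: contra nij => /eqP /enum_rank_inj ->.
  case: (ltngtP (enum_rank (enum_val i)) (enum_rank (enum_val j))) => hlt.
  + by exfalso; apply: (gj _ hlt ri).
  + by exfalso; apply: (gi _ hlt rj); apply: id_sym.
  + by case/eqP: nr; apply: val_inj.
- move=> x Ox.
  have rs : reach (h x) by exists x.
  pose Q := fun t => `[< reach t /\ a (rep t - x) >].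
  have Qs : Q (h x).
    apply/asboolP; split => //; have [Or hr] := rep_spec _ rs; exact: hh.
  case: (arg_minnP (fun t => nat_of_ord (enum_rank t)) Qs) => t0 /asboolP [r0 a0] hmin.
  have Pt0 : t0 \in P.
    rewrite inE; apply/asboolP; split => // s' hlt rs' hs'.
    have : Q s' by apply/asboolP; split => //; apply: id_trans hs' a0.
    by move=> /hmin; rewrite leqNgt hlt.
  exists (enum_rank_in Pt0 t0); rewrite enum_rankK_in //.
  exact: id_sym.
Qed.
End Ideal.
Local Notation n := (\dim {:K}).
Local Notation e := (vbasis {:K}).
Definition Mx (y : K) : 'M[rat]_n := \matrix_(i, j) coord e j (e`_i * y).
Lemma expand (w : K) : w = \sum_i coord e i w *: e`_i.
Proof. exact: coord_vbasis (memvf w). Qed.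
Lemma coordM w y j : coord e j (w * y) = \sum_i coord e i w * Mx y i j.
Proof.
rewrite {1}(expand w) mulr_suml linear_sum /=; apply: eq_bigr => i _.
by rewrite -scalerAl linearZ /= mxE.
Qed.
Lemma MxM x y : Mx (x * y) = Mx x *m Mx y.
Proof.
apply/matrixP=> i k; rewrite [LHS]mxE mulrA coordM [RHS]mxE.
by apply: eq_bigr => j _; rewrite [Mx x i j]mxE.
Qed.
Lemma MxD x y : Mx (x + y) = Mx x + Mx y.
Proof. by apply/matrixP=> i k; rewrite !mxE mulrDr linearD. Qed.
Lemma MxZ (a : rat) x : Mx (a *: x) = a *: Mx x.
Proof. by apply/matrixP=> i k; rewrite !mxE -scalerAr linearZ. Qed.
Lemma Mx1 : Mx 1 = 1%:M.
Proof.
by apply/matrixP=> i k; rewrite !mxE mulr1 coord_free ?(basis_free (vbasisP _)).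
Qed.
Lemma Mx0 : Mx 0 = 0.
Proof. by apply/matrixP=> i k; rewrite !mxE mulr0 linear0. Qed.
Lemma Mx_inj x y : Mx x = Mx y -> x = y.
Proof.
move=> h; have : forall j, coord e j (1 * x) = coord e j (1 * y).
  by move=> j; rewrite !coordM h.
rewrite !mul1r => hc; rewrite (expand x) (expand y); apply: eq_bigr => i _; by rewrite hc.
Qed.
Definition Tr (y : K) : rat := \tr (Mx y).
Lemma TrD x y : Tr (x + y) = Tr x + Tr y. Proof. by rewrite /Tr MxD mxtraceD. Qed.
Lemma TrZ a x : Tr (a *: x) = a * Tr x. Proof. by rewrite /Tr MxZ mxtraceZ. Qed.
Lemma Tr1 : Tr 1 = n%:R. Proof. by rewrite /Tr Mx1 mxtrace1. Qed.
Lemma dim_gt0 : (0 < n)%N.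
Proof.
rewrite lt0n dimv_eq0; apply/negP => /eqP h.
by have := memvf (1 : K); rewrite h memv0 oner_eq0.
Qed.
Lemma Mx_int (c : int) : Mx (c%:~R) = (c%:~R : rat) *: 1%:M.
Proof. by rewrite -Mx1 -MxZ scaler_int. Qed.

Lemma eig_poly (x : K) (z : algC) (v : 'rV[algC]_n) :
  v *m map_mx ratr (Mx x) = z *: v ->
  forall q : {poly int},
  v *m map_mx ratr (Mx (map_poly intr q).[x]) = (map_poly intr q).[z] *: v.
Proof.
move=> hv; elim/poly_ind => [|q c IH].
  by rewrite !rmorph0 !horner0 Mx0 map_mx0 mulmx0 scale0r.
rewrite !rmorphD !rmorphM /= !map_polyX !map_polyC /= !hornerE.
rewrite MxD MxM map_mxD map_mxM mulmxDr mulmxA IH -scalemxAl hv scalerA.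
rewrite Mx_int map_mxZ map_mx1 -scalemxAr mulmx1 rmorph_int scalerDl.
by [].
Qed.
Lemma Tr_int x : O x -> Tr x \in Num.int.
Proof.
case=> p [mon_p px].
set A := map_mx (ratr : rat -> algC) (Mx x).
have [r hr] := closed_field_poly_normal (char_poly A).
rewrite (monicP (char_poly_monic A)) scale1r in hr.
have szr : size r = n.
  by have := size_char_poly A; rewrite hr size_prod_XsubC => -[].
have trA : \tr A = \sum_(z <- r) z.
  apply: oppr_inj; rewrite -char_poly_trace ?dim_gt0 // hr -szr coefPn_prod_XsubC //.
  by rewrite szr -lt0n dim_gt0.
have Aint_r : forall z, z \in r -> z \in Aint.
  move=> z zr.
  have : root (char_poly A) z by rewrite hr root_prod_XsubC.
  rewrite -eigenvalue_root_char => /eigenvalueP [v hv vnz].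
  have := eig_poly hv p; rewrite (rootP px) Mx0 map_mx0 mulmx0 => /esym /eqP.
  rewrite scaler_eq0 (negPf vnz) orbF => hz.
  apply: (root_monic_Aint hz); first exact: monic_map.
  by apply/polyOverP => i; rewrite coef_map /= intr_int.
have : (ratr (Tr x) : algC) \in Aint.
  by rewrite /Tr -trace_map_mx -/A trA big_seq; apply: rpred_sum => z; apply: Aint_r.
move=> /(Cint_rat_Aint (Crat_rat _)) /floorK hf.
have -> : Tr x = (Num.floor ((ratr : rat -> algC) (Tr x)))%:~R.
  by apply: (fmorph_inj (ratr : {rmorphism rat -> algC})); rewrite rmorph_int hf.
exact: intr_int.
Qed.
Lemma common_den (F : finType) (r : F -> rat) :
  exists D : int, 0 < D /\ forall k, D%:~R * r k \in Num.int.
Proof.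
exists (\prod_k denq (r k)); split.
  by apply: prodr_gt0 => k _; apply: denq_gt0.
move=> k; rewrite (bigD1 k) //= intrM mulrC mulrA -numqE.
by rewrite mulrC rpredM ?intr_int.
Qed.
Lemma e_neq0 (i : 'I_n) : e`_i != 0 :> K.
Proof.
apply: (free_not0 (basis_free (vbasisP {:K}))).
by apply: mem_nth; rewrite size_tuple.
Qed.
Lemma intr_mul_scale (D : int) (y : K) : D%:~R * y = (D%:~R : rat) *: y.
Proof. by rewrite scaler_int mulrzl. Qed.

Lemma den_O (y : K) : exists D : int, 0 < D /\ O (D%:~R * y).
Proof.
have [D [D0 hD]] := common_den (fun ij : 'I_n * 'I_n => Mx y ij.1 ij.2).
exists D; split => //.
pose AZ : 'M[int]_n := \matrix_(i, j) Num.floor ((D%:~R : rat) * Mx y i j).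
have hAZ i j : ((AZ i j)%:~R : rat) = coord e j (e`_i * (D%:~R * y)).
  rewrite mxE floorK; last exact: (hD (i, j)).
  by rewrite intr_mul_scale -scalerAr linearZ /= mxE.
set z := D%:~R * y in hAZ *.
pose v : 'rV[K]_n := \row_i e`_i.
pose A' : 'M[K]_n := map_mx intr AZ^T.
have hv : v *m A' = z *: v.
  apply/rowP => j; rewrite !mxE mulrC [in RHS](expand (e`_j * z)).
  apply: eq_bigr => i _; rewrite -hAZ !mxE.
  by rewrite scaler_int mulrzr.
have vnz : v != 0.
  apply/negP => /eqP/rowP/(_ (Ordinal dim_gt0)); rewrite !mxE => h.
  by have := e_neq0 (Ordinal dim_gt0); rewrite h eqxx.
have : eigenvalue A' z by apply/eigenvalueP; exists v.
rewrite eigenvalue_root_char /A' -map_char_poly => hr.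
by exists (char_poly AZ^T); split => //; apply: char_poly_monic.
Qed.
Lemma O_horner (q : {poly int}) x : O x -> O ((map_poly intr q).[x]).
Proof.
move=> Ox; elim/poly_ind: q => [|q c IH].
  by rewrite rmorph0 horner0; have := O_int 0.
rewrite rmorphD rmorphM /= map_polyX map_polyC /= !hornerE.
by apply: O_add; [apply: O_mul | apply: O_int].
Qed.

Lemma int_in_ideal (a : set K) : nonzero_ideal a -> exists N : int, N != 0 /\ a N%:~R.
Proof.
case=> ha [x [ax xnz]]; have [p [mp px]] := id_sub ha ax.
elim/poly_ind: p mp px => [|p c IH] mp px.
  by move: mp; rewrite monicE lead_coef0 eq_sym oner_eq0.
have [c0|cnz] := eqVneq c 0.
  move: mp px; rewrite c0 addr0 monicE lead_coefMX -monicE => mp.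
  rewrite /root rmorphM /= map_polyX hornerMX mulf_eq0 (negPf xnz) orbF.
  exact: IH.
exists c; split => //.
move: px; rewrite /root rmorphD rmorphM /= map_polyX map_polyC /= !hornerE.
rewrite addrC addr_eq0 => /eqP ->.
rewrite -mulNr; apply: (idM ha) => //; apply: O_opp; exact: O_horner (id_sub ha ax).
Qed.
Lemma Tr0 : Tr 0 = 0. Proof. by rewrite /Tr Mx0 mxtrace0. Qed.
Lemma Tr_sum (I : finType) (F : I -> K) : Tr (\sum_i F i) = \sum_i Tr (F i).
Proof. exact: (big_morph Tr TrD Tr0). Qed.

Lemma fam_den (I : finType) (y : I -> K) :
  exists D : int, 0 < D /\ forall i, O (D%:~R * y i).
Proof.
have [f hf] := choice (fun i => den_O (y i)).
exists (\prod_i f i); split; first by apply: prodr_gt0 => i _; case: (hf i).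
move=> i; rewrite (bigD1 i) //= intrM mulrAC; apply: O_mul; first by case: (hf i).
exact: O_int.
Qed.

Lemma coord_scaled (c : 'I_n -> rat) i : coord e i (\sum_k c k *: e`_k) = c i.
Proof. exact: coord_sum_free (basis_free (vbasisP _)). Qed.

Lemma norm_exists (a : set K) : nonzero_ideal a -> exists n, ideal_norm a n.
Proof.
move=> hna; have ha := hna.1.
have [N [Nnz aN]] := int_in_ideal hna.
have [D [D0 hD]] := fam_den (fun i : 'I_n => e`_i).
have Dnz : (D%:~R : rat) != 0 by rewrite intr_eq0 gt_eqF.
pose g (i : 'I_n) := D%:~R * e`_i.
have gE (i : 'I_n) : g i = (D%:~R : rat) *: e`_i by rewrite /g intr_mul_scale.
pose T : 'M[rat]_n := \matrix_(i, j) Tr (g i * g j).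
have Tint i j : T i j \in Num.int by rewrite mxE; apply: Tr_int; apply: O_mul; apply: hD.
pose TZ : 'M[int]_n := \matrix_(i, j) Num.floor (T i j).
have hTZ : map_mx intr TZ = T by apply/matrixP => i j; rewrite mxE [TZ i j]mxE floorK ?Tint.
pose dl := \det TZ.
have dlnz : dl != 0.
  apply/negP => /eqP hd.
  have : \det T == 0 by rewrite -hTZ det_map_mx -/dl hd.
  case/det0P => c cnz hc.
  pose y := \sum_i c 0 i *: g i.
  have hy (j : 'I_n) : Tr (y * g j) = 0.
    have := congr1 (fun M : 'M[rat]_(1, n) => M 0 j) hc; rewrite !mxE => <-.
    rewrite mulr_suml Tr_sum; apply: eq_bigr => i _.
    by rewrite -scalerAl TrZ mxE.
  have hyw w : Tr (y * w) = 0.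
    rewrite (expand w) mulr_sumr Tr_sum big1 // => j _.
    rewrite -scalerAr TrZ.
    have : (D%:~R : rat) * Tr (y * e`_j) = 0 by rewrite -TrZ scalerAr -gE hy.
    by move/eqP; rewrite mulf_eq0 (negPf Dnz) /= => /eqP ->; rewrite mulr0.
  have ynz : y != 0.
    apply: contra cnz => /eqP y0; apply/eqP/rowP => i; rewrite mxE.
    have : coord e i y = c 0 i * D%:~R.
      rewrite /y (eq_bigr (fun k => (c 0 k * D%:~R) *: e`_k)) ?coord_scaled //.
      by move=> k _; rewrite gE scalerA.
    rewrite y0 linear0 => /esym/eqP; rewrite mulf_eq0 (negPf Dnz) orbF => /eqP //.
  have := hyw y^-1; rewrite mulfV // Tr1 => /eqP; rewrite pnatr_eq0.
  by apply/negP; rewrite -lt0n dim_gt0.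
have dlnzR : (dl%:~R : rat) != 0 by rewrite intr_eq0.
pose d := N * dl.
have dnz : d != 0 by rewrite mulf_neq0.
pose t (x : K) : 'rV[int]_n := \row_j Num.floor (Tr (x * g j)).
pose u (x : K) : 'rV[int]_n := t x *m \adj TZ.
have key x i : O x -> (dl%:~R : rat) * coord e i x = D%:~R * (u x 0 i)%:~R.
  move=> Ox.
  pose c : 'rV[rat]_n := \row_i coord e i x.
  have ht : map_mx intr (t x) = \row_j Tr (x * g j).
    apply/rowP => j; rewrite !mxE floorK //; apply: Tr_int; apply: O_mul => //; exact: hD.
  have h1 : (D%:~R : rat) *: map_mx intr (t x) = c *m T.
    apply/rowP => j; rewrite ht mxE [(\row_j0 _) 0 j]mxE -TrZ scalerAl mxE.
    rewrite {1}(expand x) scaler_sumr mulr_suml Tr_sum; apply: eq_bigr => k _.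
    rewrite [X in Tr X]mulrC scalerA [_%:~R * _]mulrC -scalerA -gE -scalerAr TrZ !mxE.
    by congr (_ * _); rewrite mulrC.
  have h2 : (D%:~R : rat) *: map_mx intr (u x) = (dl%:~R : rat) *: c.
    rewrite /u map_mxM map_mx_adj hTZ scalemxAl h1 -mulmxA mul_mx_adj.
    by rewrite -hTZ det_map_mx mul_mx_scalar.
  have := congr1 (fun M : 'M[rat]_(1,n) => M 0 i) h2.
  rewrite [LHS]mxE [RHS]mxE [c 0 i]mxE [map_mx _ _ 0 i]mxE => ->.
  by [].
pose P := absz d.
apply: (@finite_index a ha _ (fun x => [ffun i => (inord (absz (modz (u x 0 i) d)) : 'I_P.+1)])).
move=> x y Ox Oy /ffunP hxy.
have hk i : exists k : int, u x 0 i - u y 0 i = k * d.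
  have bnd m : (absz (modz m d) < P.+1)%N.
    have := ltz_mod m dnz; have := modz_ge0 m dnz; rewrite /P; lia.
  have := hxy i; rewrite !ffunE => /(congr1 val); rewrite /= !inordK ?bnd // => habs.
  have : modz (u x 0 i) d = modz (u y 0 i) d.
    by rewrite -[LHS]gez0_abs ?modz_ge0 // -[RHS]gez0_abs ?modz_ge0 // habs.
  by move/eqP; rewrite eqz_mod_dvd => /dvdzP.
have [k hk'] := choice hk.
have -> : x - y = (\sum_i (k i)%:~R * g i) * N%:~R.
  rewrite [x](expand) [y](expand) -sumrB mulr_suml; apply: eq_bigr => i _.
  rewrite -scalerBl.
  have : coord e i x - coord e i y = ((k i * N * D)%:~R : rat).
    apply: (mulfI dlnzR); rewrite mulrBr !key // -mulrBr -rmorphB /= hk' /d.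
    by rewrite !intrM; ring.
  by move=> ->; rewrite -intr_mul_scale /g !intrM; ring.
apply: (idM ha) => //.
apply: (big_ind O) => //; [exact: (O_int 0) | exact: O_add | ].
by move=> i _; apply: O_mul; [apply: O_int | apply: hD].
Qed.
Lemma main_K (R : set (set K)) : minimal_norm_class_reps R -> forall g, R g -> inseverable g.
Proof.
move=> [hnz [_ [_ hmin]]] g Rg.
have gnz := hnz g Rg; split => //.
have hg := gnz.1.
move=> b hb [x [Ox bE]] gsub; subst b.
have [y0 [gy0 y0nz]] := gnz.2.
have xnz : x != 0.
  have [r [_ hr]] := gsub _ gy0.
  by apply: contra y0nz => /eqP x0; rewrite hr x0 mulr0.
have [Oxi|nOxi] := pselect (O x^-1).
  rewrite predeqE => z; split.
    by case=> r [Or ->]; apply: O_mul.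
  move=> Oz; exists (z * x^-1); split; first exact: O_mul.
  by rewrite -mulrA mulVf // mulr1.
exfalso.
pose g' := scale_set x^-1 g.
have hg' : is_ideal g'.
  split; [|split; [|split]].
  - move=> w [z [gz ->]]; have [r [Or ->]] := gsub _ gz.
    by rewrite mulrC -mulrA mulfV // mulr1.
  - by exists 0; split; [exact: id0 | rewrite mulr0].
  - move=> w1 w2 [z1 [g1 ->]] [z2 [g2 ->]]; exists (z1 + z2); split.
      exact: idD.
    by rewrite mulrDr.
  - move=> r w Or [z [gz ->]]; exists (r * z); split; first exact: idM.
    by rewrite mulrCA.
have g'nz : nonzero_ideal g'.
  split => //; exists (x^-1 * y0); split; first by exists y0.
  by rewrite mulf_neq0 ?invr_eq0.
have sc : same_class g' g by exists x^-1; split; rewrite ?invr_eq0.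
have [n hn] := norm_exists gnz.
have [m hm] := norm_exists g'nz.
have lenm := hmin g Rg g' g'nz sc n m hn hm.
case: hn => f [Of [finj fcov]].
case: hm => f' [Of' [finj' fcov']].
pose z (o : option 'I_m) : K := if o is Some i then x * f' i else 1.
have Oz o : O (z o) by case: o => [i|] /=; [apply: O_mul | apply: (O_int 1)].
have zinj o o' : g (z o - z o') -> o = o'.
  have none j : ~ g (1 - x * f' j).
    move=> /gsub [r [Or hr]]; apply: nOxi.
    have -> : x^-1 = r + f' j.
      apply: (mulIf xnz); rewrite mulVf // mulrDl -hr.
      by rewrite mulrC subrK.
    exact: O_add.
  case: o => [i|]; case: o' => [j|] //= h.
  - congr Some; apply: finj'; exists (x * f' i - x * f' j); split => //.
    by rewrite -mulrBr mulrA mulVf // mul1r.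
  - by exfalso; apply: (none i); apply: id_sym.
  - by exfalso; apply: (none j).
have [phi hphi] := choice (fun o => fcov (z o) (Oz o)).
have phi_inj : injective phi.
  move=> o o' h; apply: zinj.
  apply: (id_trans hg (hphi o)); rewrite h; apply: id_sym => //; exact: hphi.
have := @leq_card _ _ phi phi_inj; rewrite card_option !card_ord.
by rewrite ltnNge lenm.
Qed.
End S.

Unset Implicit Arguments.
Theorem proposition3p2 (K : fieldExtType rat) (R : set (set K)) :
  minimal_norm_class_reps R ->
  forall g, R g -> inseverable g.
Proof. exact: main_K. Qed.
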